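(* Let $d\ge 2$, $m\ge1$, and for each $u\in\mathbb{R}$, $\mu\in\{1,\ldots,m\}$ let $M_\mu^u\in\mathbb{C}^{d\times d}$ with $\sum_{\mu}(M_\mu^u)^\dagger M_\mu^u=\mathrm{I}$, each $u\mapsto M_\mu^u$ of class $C^2$, and $M_\mu^0=\sum_{n=1}^d c_{\mu,n}|n\rangle\langle n|$ in a fixed orthonormal basis $\{|n\rangle\}$ of $\mathbb{C}^d$. Let $R$ be the $d\times d$ matrix $$R_{n_1,n_2}=\sum_{\mu=1}^m\Big(2\Big|\langle n_1|\tfrac{d (M_\mu^u)^\dagger}{du}\big|_{u=0}|n_2\rangle\Big|^2+2\delta_{n_1,n_2}\,\mathrm{Re}\Big(c_{\mu,n_1}\langle n_1|\tfrac{d^2 (M_\mu^u)^\dagger}{du^2}\big|_{u=0}|n_2\rangle\Big)\Big),$$ and assume the directed graph $G$ of $R$ is strongly connected, i.e., for any $n\neq n'$ in $\{1,\ldots,d\}$ there exist distinct $n_1=n,n_2,\ldots,n_r=n'$ with $R_{n_j,n_{j+1}}\neq0$ for $j=1,\ldots,r-1$. Fix $\bar n\in\{1,\ldots,d\}$. Then there exist $d-1$ strictly positive reals $e_n$, $n\in\{1,\ldots,d\}\setminus\{\bar n\}$, such that: (i) for any reals $\lambda_n$, $n\neq\bar n$, there exists a unique vector $\sigma\in\mathbb{R}^d$ with $\sigma_{\bar n}=0$ and $R\sigma=\lambda$, where $\lambda\in\mathbb{R}^d$ has components $\lambda_n$ for $n\neq\bar n$ and $\lambda_{\bar n}=-\sum_{n\neq\bar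 n}e_n\lambda_n$; if moreover $\lambda_n<0$ for all $n\neq\bar n$, then $\sigma_n>0$ for all $n\neq\bar n$; (ii) for any $\sigma\in\mathbb{R}^d$ with $R\sigma=\lambda\in\mathbb{R}^d$, the function $V_0(\rho)=\sum_{n=1}^d\sigma_n\langle n|\rho|n\rangle$ satisfies $$\frac{d^2}{du^2}V_0\big(\mathbb{K}^u(|n\rangle\langle n|)\big)\Big|_{u=0}=\lambda_n\quad\text{for all } n\in\{1,\ldots,d\},$$ where $\mathbb{K}^u(\rho)=\sum_{\mu=1}^m M_\mu^u\rho (M_\mu^u)^\dagger$.
   Context: $\dagger$ denotes conjugate transpose; $\delta$ is the Kronecker delta. The directed graph of $R$ has vertices $1,\ldots,d$ and an edge $n_1\to n_2$ for each $n_1\neq n_2$ with $R_{n_1,n_2}>0$. *)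

(* Defs.v *)
From HB Require Import structures.
From mathcomp Require Import all_boot all_order all_algebra.
From mathcomp Require Import all_classical all_reals all_analysis.
From mathcomp Require Import complex.
Set Implicit Arguments. Unset Strict Implicit. Unset Printing Implicit Defensive.
Import Order.TTheory GRing.Theory Num.Theory.
Import numFieldNormedType.Exports.
Local Open Scope ring_scope.
Local Open Scope complex_scope.

Section Defs.
Variable R : realType.

Definition cRe (f : R -> R[i]) : R -> R := fun u => complex.Re (f u).
Definition cIm (f : R -> R[i]) : R -> R := fun u => complex.Im (f u).

Definition cder (f : R -> R[i]) : R -> R[i] :=
  fun u => (derive1 (cRe f) u +i* derive1 (cIm f) u).

Definition C2_real (g : R -> R) : Prop :=
  (forall x, derivable g x 1) /\ (forall x, derivable (derive1 g) x 1) /\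
  continuous (derive1 (derive1 g) : R -> R).

Definition C2_cplx (f : R -> R[i]) : Prop := C2_real (cRe f) /\ C2_real (cIm f).

Definition C2_mx d (F : R -> 'M[R[i]]_d) : Prop :=
  forall i j, C2_cplx (fun u => F u i j).

Definition mxder d (F : R -> 'M[R[i]]_d) : R -> 'M[R[i]]_d :=
  fun u => \matrix_(i, j) cder (fun v => F v i j) u.

Definition adj d (A : 'M[R[i]]_d) : 'M[R[i]]_d := \matrix_(i, j) (A j i)^*.

Definition sqnorm (z : R[i]) : R := complex.Re z ^+ 2 + complex.Im z ^+ 2.

Definition Kmap d m (M : 'I_m -> R -> 'M[R[i]]_d) (u : R) (rho : 'M[R[i]]_d)
  : 'M[R[i]]_d := \sum_(mu < m) (M mu u *m rho *m adj (M mu u)).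

Definition proj_basis d (n : 'I_d) : 'M[R[i]]_d := delta_mx n n.

Definition V0 d (sigma : 'cV[R]_d) (rho : 'M[R[i]]_d) : R[i] :=
  \sum_(n < d) (sigma n 0)%:C * rho n n.

Definition Rmat d m (M : 'I_m -> R -> 'M[R[i]]_d) (c : 'I_m -> 'I_d -> R[i])
  : 'M[R]_d :=
  \matrix_(n1, n2) \sum_(mu < m)
     (2 * sqnorm (mxder (fun u => adj (M mu u)) 0 n1 n2)
      + 2 * (n1 == n2)%:R *
          complex.Re (c mu n1 * mxder (mxder (fun u => adj (M mu u))) 0 n1 n2)).

Definition strongly_connected d (A : 'M[R]_d) : Prop :=
  forall n n' : 'I_d, n != n' ->
    exists s : seq 'I_d,
      [/\ path (fun x y => A x y != 0) n s, last n s = n' & uniq (n :: s)].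

End Defs.
Arguments proj_basis {R d}.

(* Main.v *)
Require Import Defs.
From HB Require Import structures.
From mathcomp Require Import all_boot all_order all_algebra.
From mathcomp Require Import all_classical all_reals all_analysis.
From mathcomp Require Import complex.
From mathcomp Require Import ring lra.
Import Order.TTheory GRing.Theory Num.Theory.
Import numFieldNormedType.Exports.
Local Open Scope ring_scope.
Local Open Scope complex_scope.

Module Helpers.
Set Implicit Arguments. Unset Strict Implicit.

Section An.
Variable R : realType.
Definition Dv (g : R -> R) := forall x, derivable g x 1.
Definition C2 (g : R -> R) := Dv g /\ Dv (derive1 g).
Definition D2 (g : R -> R) := derive1 (derive1 g) 0.

Lemma der1D (f g : R -> R) : Dv f -> Dv g ->
  derive1 (fun u => f u + g u) = (fun u => derive1 f u + derive1 g u).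
Proof. move=> df dg; apply/funext=> x; rewrite !derive1E; exact: deriveD. Qed.

Lemma der1M (f g : R -> R) : Dv f -> Dv g ->
  derive1 (fun u => f u * g u) = (fun u => f u * derive1 g u + g u * derive1 f u).
Proof. move=> df dg; apply/funext=> x; rewrite !derive1E; exact: deriveM. Qed.

Lemma der1N (f : R -> R) : Dv f ->
  derive1 (fun u => - f u) = (fun u => - derive1 f u).
Proof. move=> df; apply/funext=> x; rewrite !derive1E; exact: deriveN. Qed.

Lemma der1C (k : R) : derive1 (fun _ : R => k) = (fun _ => 0).
Proof. apply/funext=> x; exact: derive1_cst. Qed.

Lemma DvD (f g : R -> R) : Dv f -> Dv g -> Dv (fun u => f u + g u).
Proof. move=> df dg x; exact: derivableD. Qed.

Lemma DvM (f g : R -> R) : Dv f -> Dv g -> Dv (fun u => f u * g u).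
Proof. move=> df dg x; exact: derivableM. Qed.

Lemma DvN (f : R -> R) : Dv f -> Dv (fun u => - f u).
Proof. move=> df x; exact: derivableN. Qed.

Lemma DvC (k : R) : Dv (fun _ => k).
Proof. move=> x; exact: derivable_cst. Qed.

Arguments der1D {f g}. Arguments der1M {f g}. Arguments der1N {f}.
Arguments DvD {f g}. Arguments DvM {f g}. Arguments DvN {f}.

Lemma Dv_sum (I : Type) (r : seq I) (P : pred I) (h : I -> R -> R) :
  (forall i, Dv (h i)) ->
  Dv (fun u => \sum_(i <- r | P i) h i u) /\
  derive1 (fun u => \sum_(i <- r | P i) h i u) = (fun u => \sum_(i <- r | P i) derive1 (h i) u).
Proof.
move=> dh; elim: r => [|x r [IH1 IH2]].
  have -> : (fun u => \sum_(i <- [::] | P i) h i u) = (fun _ => 0).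
    by apply/funext=> u; rewrite big_nil.
  by split; [exact: DvC | rewrite der1C; apply/funext=> u; rewrite big_nil].
have -> : (fun u => \sum_(i <- x :: r | P i) h i u) =
  (fun u => if P x then h x u + \sum_(i <- r | P i) h i u else \sum_(i <- r | P i) h i u).
  by apply/funext=> u; rewrite big_cons.
case Px: (P x).
  split; first exact: (DvD (dh x) IH1).
  by rewrite (der1D (dh x) IH1) IH2; apply/funext=> u; rewrite big_cons Px.
by split=> //; rewrite IH2; apply/funext=> u; rewrite big_cons Px.
Qed.

Lemma C2D (f g : R -> R) : C2 f -> C2 g -> C2 (fun u => f u + g u).
Proof.
move=> [f1 f2] [g1 g2]; split; first exact: (DvD f1 g1).
rewrite (der1D f1 g1). exact: (DvD f2 g2).
Qed.

Lemma D2D (f g : R -> R) : C2 f -> C2 g -> D2 (fun u => f u + g u) = D2 f + D2 g.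
Proof. by move=> [f1 f2] [g1 g2]; rewrite /D2 (der1D f1 g1) (der1D f2 g2). Qed.

Lemma C2M (f g : R -> R) : C2 f -> C2 g -> C2 (fun u => f u * g u).
Proof.
move=> [f1 f2] [g1 g2]; split; first exact: (DvM f1 g1).
rewrite (der1M f1 g1); exact: (DvD (DvM f1 g2) (DvM g1 f2)).
Qed.

Lemma D2M (f g : R -> R) : C2 f -> C2 g -> D2 (fun u => f u * g u) =
  f 0 * D2 g + 2 * (derive1 f 0 * derive1 g 0) + g 0 * D2 f.
Proof.
move=> [f1 f2] [g1 g2]; rewrite /D2 (der1M f1 g1) (der1D (DvM f1 g2) (DvM g1 f2)).
rewrite (der1M f1 g2) (der1M g1 f2).
move: (f 0) (g 0) (derive1 f 0) (derive1 g 0) (derive1 (derive1 f) 0) (derive1 (derive1 g) 0) => a b a1 b1 a2 b2.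
ring.
Qed.

Lemma C2C (k : R) : C2 (fun _ => k).
Proof. by split; [exact: DvC | rewrite der1C; exact: DvC]. Qed.

Lemma D2C (k : R) : D2 (fun _ => k) = 0.
Proof. by rewrite /D2 der1C der1C. Qed.

Lemma C2_sum (I : Type) (r : seq I) (P : pred I) (h : I -> R -> R) :
  (forall i, C2 (h i)) ->
  C2 (fun u => \sum_(i <- r | P i) h i u) /\
  D2 (fun u => \sum_(i <- r | P i) h i u) = \sum_(i <- r | P i) D2 (h i).
Proof.
move=> ch.
have [d1 e1] := Dv_sum r P (fun i => (ch i).1).
have [d2 e2] := Dv_sum r P (fun i => (ch i).2).
by split; [split=> //; rewrite e1 | rewrite /D2 e1 e2].
Qed.

Lemma C2Z (s : R) (g : R -> R) : C2 g -> C2 (fun u => s * g u) /\ D2 (fun u => s * g u) = s * D2 g.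
Proof.
move=> cg; split; first exact: (C2M (C2C s) cg).
rewrite (D2M (C2C s) cg) D2C der1C; ring.
Qed.

Lemma C2_sum_ord (n : nat) (h : 'I_n -> R -> R) :
  (forall i, C2 (h i)) ->
  C2 (fun u => \sum_(i < n) h i u) /\ D2 (fun u => \sum_(i < n) h i u) = \sum_(i < n) D2 (h i).
Proof. exact: C2_sum. Qed.
End An.

Section Cx.
Variable R : realType.

Definition sq (f : R -> R[i]) := fun u => cRe f u * cRe f u + cIm f u * cIm f u.

Lemma C2r (g : R -> R) : C2_real g -> C2 g.
Proof. by case=> [g1 [g2 _]]; split. Qed.

Lemma C2sq f : C2_cplx f -> C2 (sq f) /\ D2 (sq f) =
  2 * (derive1 (cRe f) 0 ^+ 2 + derive1 (cIm f) 0 ^+ 2) +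
  2 * (cRe f 0 * D2 (cRe f) + cIm f 0 * D2 (cIm f)).
Proof.
case=> /C2r ha /C2r hb; split; first exact: C2D (C2M ha ha) (C2M hb hb).
rewrite /sq (D2D (C2M ha ha) (C2M hb hb)) (D2M ha ha) (D2M hb hb).
move: (cRe f 0) (cIm f 0) (derive1 (cRe f) 0) (derive1 (cIm f) 0) (D2 (cRe f)) (D2 (cIm f)) => *.
ring.
Qed.

Lemma cder_conj (f : R -> R[i]) : Dv (cRe f) -> Dv (cIm f) ->
  cder (fun v => (f v)^*) = fun v => derive1 (cRe f) v +i* - derive1 (cIm f) v.
Proof.
move=> ha hb; rewrite /cder.
have -> : cRe (fun v => (f v)^*) = cRe f by apply/funext=> v; rewrite /cRe; case: (f v).
have -> : cIm (fun v => (f v)^*) = (fun v => - cIm f v) by apply/funext=> v; rewrite /cIm; case: (f v).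
by rewrite (der1N hb).
Qed.

Lemma Re_sum (I : Type) (r : seq I) (P : pred I) (F : I -> R[i]) :
  complex.Re (\sum_(i <- r | P i) F i) = \sum_(i <- r | P i) complex.Re (F i).
Proof.
elim: r => [|x r IH]; first by rewrite !big_nil.
rewrite !big_cons; case: (P x) => //; rewrite -IH.
by case: (F x); case: (\sum_(i <- r | P i) F i).
Qed.

Lemma Im_sum (I : Type) (r : seq I) (P : pred I) (F : I -> R[i]) :
  complex.Im (\sum_(i <- r | P i) F i) = \sum_(i <- r | P i) complex.Im (F i).
Proof.
elim: r => [|x r IH]; first by rewrite !big_nil.
rewrite !big_cons; case: (P x) => //; rewrite -IH.
by case: (F x); case: (\sum_(i <- r | P i) F i).
Qed.

Lemma Re_conjM (z : R[i]) : complex.Re (z^* * z) = complex.Re z * complex.Re z + complex.Im z * complex.Im z.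
Proof. by case: z => x y /=; ring. Qed.
Lemma Im_conjM (z : R[i]) : complex.Im (z^* * z) = 0.
Proof. by case: z => x y /=; ring. Qed.
Lemma Re_Mconj (z : R[i]) : complex.Re (z * z^*) = complex.Re z * complex.Re z + complex.Im z * complex.Im z.
Proof. by case: z => x y /=; ring. Qed.
Lemma Im_Mconj (z : R[i]) : complex.Im (z * z^*) = 0.
Proof. by case: z => x y /=; ring. Qed.

Lemma mxdelta_entry d (A B : 'M[R[i]]_d) (n k : 'I_d) :
  (A *m delta_mx n n *m B) k k = A k n * B n k.
Proof.
have E : forall l, (A *m delta_mx n n) k l = (l == n)%:R * A k n.
  move=> l; rewrite mxE (bigD1 n) //= big1 => [|l' l'n].
    by rewrite mxE eqxx /= addr0 mulrC.
  by rewrite mxE (negbTE l'n) mulr0.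
rewrite mxE (bigD1 n) //= big1 => [|l ln]; first by rewrite E eqxx mul1r addr0.
by rewrite E (negbTE ln) mul0r mul0r.
Qed.
End Cx.

Section Rm.
Variable R : realType.

Lemma Rmat_entry d m (M : 'I_m -> R -> 'M[R[i]]_d) (c : 'I_m -> 'I_d -> R[i])
  (hC2 : forall mu, C2_mx (M mu)) (h0 : forall mu, M mu 0 = diag_mx (\row_n c mu n))
  (k j : 'I_d) :
  Rmat M c k j = \sum_(mu < m) D2 (sq (fun u => M mu u j k)).
Proof.
rewrite mxE; apply: eq_bigr => mu _.
set f := fun u => M mu u j k.
have [_ ->] := C2sq (hC2 mu j k).
have [ha hb] := hC2 mu j k.
have [ha1 [ha2 _]] := ha; have [hb1 [hb2 _]] := hb.
have E1 : forall v, mxder (fun u => adj (M mu u)) v k j =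
    derive1 (cRe f) v +i* - derive1 (cIm f) v.
  move=> v; rewrite /mxder mxE.
  have -> : (fun w => adj (M mu w) k j) = fun w => (f w)^*.
    by apply/funext => w; rewrite mxE.
  by rewrite (cder_conj ha1 hb1).
have E2 : mxder (mxder (fun u => adj (M mu u))) 0 k j = D2 (cRe f) +i* - D2 (cIm f).
  rewrite {1}/mxder mxE.
  have -> : (fun v => mxder (fun u => adj (M mu u)) v k j) =
     fun v => (derive1 (cRe f) v +i* derive1 (cIm f) v)^*.
    by apply/funext => v; rewrite E1.
  by rewrite (@cder_conj _ (fun v => derive1 (cRe f) v +i* derive1 (cIm f) v) ha2 hb2).
rewrite E1 E2 /sqnorm /= -/f.
have -> : cRe f 0 = complex.Re (M mu 0 j k) by [].
have -> : cIm f 0 = complex.Im (M mu 0 j k) by [].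
move: (derive1 (cRe f) 0) (derive1 (cIm f) 0) (D2 (cRe f)) (D2 (cIm f)) => a1 b1 a2 b2.
rewrite h0 !mxE.
case: (eqVneq j k) => [->|jk] /=.
  rewrite ?mulr1n; case: (c mu k) => x y /=.
  ring.
rewrite ?mulr0n /=.
ring.
Qed.
End Rm.

Section Rm2.
Variable R : realType.
Variables (d m : nat) (M : 'I_m -> R -> 'M[R[i]]_d) (c : 'I_m -> 'I_d -> R[i]).
Hypothesis hTP : forall u : R, \sum_(mu < m) (adj (M mu u) *m M mu u) = 1%:M.
Hypothesis hC2 : forall mu, C2_mx (M mu).
Hypothesis h0 : forall mu, M mu 0 = diag_mx (\row_n c mu n).

Lemma Rmat_rowsum (k : 'I_d) : \sum_(j < d) Rmat M c k j = 0.
Proof.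
under eq_bigr do rewrite (Rmat_entry hC2 h0).
have hin := fun j => C2_sum_ord (h := fun mu => sq (fun u => M mu u j k)) (fun mu => (C2sq (hC2 mu j k)).1).
under eq_bigr do rewrite -(hin _).2.
rewrite -(C2_sum_ord (h := fun j u => \sum_(mu < m) sq (fun u => M mu u j k) u) (fun j => (hin j).1)).2.
have -> : (fun u => \sum_(j < d) \sum_(mu < m) sq (fun u => M mu u j k) u) = (fun _ => 1).
  apply/funext => u.
  have := congr1 (fun A : 'M[R[i]]_d => complex.Re (A k k)) (hTP u).
  rewrite /= summxE mxE eqxx /= Re_sum => <-.
  rewrite exchange_big /=; apply: eq_bigr => mu _.
  rewrite mxE Re_sum; apply: eq_bigr => j _.
  by rewrite mxE Re_conjM.
exact: D2C.
Qed.

Lemma part_ii (sigma : 'cV[R]_d) (n : 'I_d) :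
  cder (cder (fun u => V0 sigma (Kmap M u (proj_basis n)))) 0 =
  ((Rmat M c *m sigma) n 0)%:C.
Proof.
set F := fun u => V0 sigma (Kmap M u (proj_basis n)).
have reF : cRe F = fun u => \sum_(k < d) sigma k 0 * \sum_(mu < m) sq (fun u => M mu u k n) u.
  apply/funext => u; rewrite /cRe /F /V0 Re_sum; apply: eq_bigr => k _.
  rewrite /Kmap summxE.
  have -> : forall (s : R) (z : R[i]), complex.Re (s%:C * z) = s * complex.Re z.
    by move=> s [x y] /=; ring.
  congr (_ * _); rewrite Re_sum; apply: eq_bigr => mu _.
  by rewrite /proj_basis mxdelta_entry mxE Re_Mconj.
have imF : cIm F = fun u => 0.
  apply/funext => u; rewrite /cIm /F /V0 Im_sum; apply: big1 => k _.
  rewrite /Kmap summxE.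
  have -> : forall (s : R) (z : R[i]), complex.Im (s%:C * z) = s * complex.Im z.
    by move=> s [x y] /=; ring.
  rewrite Im_sum big1 ?mulr0 // => mu _.
  by rewrite /proj_basis mxdelta_entry mxE Im_Mconj.
have -> : cder (cder F) 0 = derive1 (derive1 (cRe F)) 0 +i* derive1 (derive1 (cIm F)) 0 by [].
rewrite imF der1C der1C reF.
have hk := fun k => C2_sum_ord (h := fun mu => sq (fun u => M mu u k n)) (fun mu => (C2sq (hC2 mu k n)).1).
have hs := fun k => C2Z (sigma k 0) (hk k).1.
have HH := (C2_sum_ord (h := fun k u => sigma k 0 * \sum_(mu < m) sq (fun u => M mu u k n) u) (fun k => (hs k).1)).2.
rewrite /D2 in HH; rewrite HH.
rewrite mxE /real_complex_def; congr Complex.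
apply: eq_bigr => k _.
rewrite -[LHS]/(D2 _) (hs k).2 (hk k).2 (Rmat_entry hC2 h0) mulrC.
done.
Qed.
End Rm2.

Section LA.
Variable R : realType.
Variable d : nat.
Variable A : 'M[R]_d.
Hypothesis hoff : forall i j, i != j -> 0 <= A i j.
Hypothesis hrow : forall i, \sum_j A i j = 0.
Hypothesis hG : strongly_connected A.
Variable nbar : 'I_d.

Lemma path_back (P : pred 'I_d) :
  (forall x y, x != y -> A x y != 0 -> P y -> P x) ->
  forall s n, path (fun x y => A x y != 0) n s -> uniq (n :: s) -> P (last n s) -> P n.
Proof.
move=> cl; elim=> [//|y s IH] n /= /andP[hny hp] /andP[]; rewrite inE negb_or => /andP[ny _] hu hl.
exact: (cl n y ny hny (IH y hp hu hl)).
Qed.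

Lemma reach (P : pred 'I_d) :
  (forall x y, x != y -> A x y != 0 -> P y -> P x) -> forall n n', P n' -> P n.
Proof.
move=> cl n n' hn'; case: (eqVneq n n') => [->//|nn'].
have [s [hp hl hu]] := hG nn'.
by apply: (path_back cl hp hu); rewrite hl.
Qed.

Lemma exmax (s : 'cV[R]_d) : exists mx, forall j, s j 0 <= s mx 0.
Proof.
case: (@arg_maxP _ _ 'I_d nbar xpredT (fun j => s j 0) isT) => mx _ H.
by exists mx => j; exact: H.
Qed.

Lemma maxstep (s : 'cV[R]_d) x : (forall j, s j 0 <= s x 0) ->
  (A *m s) x 0 <= 0 /\ ((A *m s) x 0 = 0 -> forall y, A x y != 0 -> s y 0 = s x 0).
Proof.
move=> hmax.
pose t j := A x j * (s j 0 - s x 0).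
have tle : forall j, t j <= 0.
  move=> j; rewrite /t; case: (eqVneq x j) => [->|xj]; first by rewrite subrr mulr0.
  by apply: mulr_ge0_le0; [exact: hoff | rewrite subr_le0].
have hsum : (A *m s) x 0 = \sum_j t j.
  rewrite mxE /t; under [RHS]eq_bigr do rewrite mulrBr.
  by rewrite sumrB -big_distrl /= hrow mul0r subr0.
split; first by rewrite hsum; apply: sumr_le0 => j _; exact: tle.
move=> h0 y hy.
have : \sum_j (- t j) = 0 by rewrite sumrN -hsum h0 oppr0.
move=> Hs.
have tge : forall j, xpredT j -> 0 <= - t j by move=> j _; rewrite oppr_ge0.
have := @psumr_eq0P _ _ xpredT (fun j => - t j) tge Hs y isT.
move/eqP; rewrite oppr_eq0 /t mulf_eq0 (negbTE hy) /= subr_eq0 => /eqP //.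
Qed.

Lemma maxprinc (s : 'cV[R]_d) : (forall n, n != nbar -> 0 <= (A *m s) n 0) ->
  forall n, s n 0 <= s nbar 0.
Proof.
move=> hge; have [mx hmx] := exmax s.
suff E : s nbar 0 = s mx 0 by move=> n; rewrite E.
pose P := fun x => (s x 0 == s mx 0) ==> (s nbar 0 == s mx 0).
have cl : forall x y, x != y -> A x y != 0 -> P y -> P x.
  move=> x y xy hxy; rewrite /P => /implyP Py; apply/implyP => /eqP hx.
  case: (eqVneq x nbar) => [e|xn]; first by rewrite -e hx.
  have hm : forall j, s j 0 <= s x 0 by move=> j; rewrite hx.
  have [h1 h2] := maxstep hm.
  have h3 : (A *m s) x 0 = 0 by apply/eqP; rewrite eq_le h1 hge.
  by apply: Py; rewrite (h2 h3 y hxy) hx.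
have := @reach P cl mx nbar.
rewrite /P eqxx implybb => /(_ isT) /implyP /(_ isT) /eqP //.
Qed.

Lemma kerA0 (s : 'cV[R]_d) : s nbar 0 = 0 -> (forall n, n != nbar -> (A *m s) n 0 = 0) -> s = 0.
Proof.
move=> h0 h; apply/matrixP => i j; rewrite (ord1 j) mxE; apply/eqP; rewrite eq_le.
have h1 : forall n, n != nbar -> 0 <= (A *m s) n 0 by move=> n hn; rewrite h.
have h2 : forall n, n != nbar -> 0 <= (A *m - s) n 0 by move=> n hn; rewrite mulmxN mxE h // oppr0.
have := maxprinc h1 i; have := maxprinc h2 i; rewrite !mxE h0 oppr0 oppr_le0 => -> ->.
done.
Qed.

Lemma leftkey (x : 'cV[R]_d) : (forall k, \sum_i x i 0 * A i k = 0) ->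
  forall i j, x i 0 < 0 -> 0 <= x j 0 -> A i j = 0.
Proof.
move=> hx i j hi hj.
pose S := [pred k | x k 0 < 0].
have E : \sum_i x i 0 * (\sum_(k | S k) A i k) = 0.
  under eq_bigr do rewrite big_distrr.
  by rewrite exchange_big /= big1 // => k _.
have split_row : forall i, \sum_(k | S k) A i k = - \sum_(k | ~~ S k) A i k.
  move=> i'; have hr := hrow i'; rewrite (bigID S) /= in hr.
  by apply/eqP; rewrite -addr_eq0 hr.
have notS_ge : forall i, S i -> 0 <= \sum_(k | ~~ S k) A i k.
  move=> i' hi'; apply: sumr_ge0 => k hk; apply: hoff.
  apply/eqP => e; move: hk hi'; rewrite -e /S /= => h1 h2; by rewrite h2 in h1.
have gge : forall i, xpredT i -> 0 <= x i 0 * (\sum_(k | S k) A i k).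
  move=> i' _; case: (ltrP (x i' 0) 0) => hi'.
    apply: mulr_le0; first exact: ltW.
    by rewrite split_row oppr_le0; apply: notS_ge.
  apply: mulr_ge0 => //; apply: sumr_ge0 => k hk; apply: hoff.
  apply/eqP => e; move: hk; rewrite -e /S /= ltNge hi'. done.
have := @psumr_eq0P _ _ xpredT _ gge E i isT.
move/eqP; rewrite mulf_eq0 (negbTE (ltr0_neq0 hi)) /= split_row oppr_eq0 => /eqP H.
have nge : forall k, ~~ S k -> 0 <= A i k.
  move=> k hk; apply: hoff; apply/eqP => e; move: hk; rewrite -e /S /= hi. done.
apply: (@psumr_eq0P _ _ (fun k => ~~ S k) _ nge H j).
by rewrite /S /= -leNgt.
Qed.

Lemma leftpos (x : 'cV[R]_d) : (forall k, \sum_i x i 0 * A i k = 0) -> 0 <= x nbar 0 ->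
  forall i, 0 <= x i 0.
Proof.
move=> hx hn i.
pose P := fun i => (x i 0 < 0) ==> (x nbar 0 < 0).
have cl : forall a b, a != b -> A a b != 0 -> P b -> P a.
  move=> a b ab hab; rewrite /P => /implyP Pb; apply/implyP => ha.
  case: (ltrP (x b 0) 0) => hb; first exact: Pb.
  by move: hab; rewrite (leftkey hx ha hb) eqxx.
have := @reach P cl i nbar; rewrite /P implybb => /(_ isT) /implyP H.
by rewrite leNgt; apply/negP => /H; rewrite ltNge hn.
Qed.

Lemma strictpos (x : 'cV[R]_d) : (forall k, \sum_i x i 0 * A i k = 0) ->
  (forall i, 0 <= x i 0) -> 0 < x nbar 0 -> forall i, 0 < x i 0.
Proof.
move=> hx hpos hn i.
pose P := fun i => x i 0 == 0.
have cl : forall a b, a != b -> A a b != 0 -> P b -> P a.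
  move=> a b ab hab; rewrite /P => /eqP Pb.
  have ge : forall k, xpredT k -> 0 <= x k 0 * A k b.
    move=> k _; case: (eqVneq k b) => [->|kb]; first by rewrite Pb mul0r.
    by apply: mulr_ge0; [exact: hpos | exact: hoff].
  have := @psumr_eq0P _ _ xpredT _ ge (hx b) a isT.
  by move/eqP; rewrite mulf_eq0 (negbTE hab) orbF.
rewrite lt_def hpos andbT; apply/negP => /eqP hi.
have := @reach P cl nbar i; rewrite /P hi eqxx => /(_ isT) /eqP e.
by move: hn; rewrite e ltxx.
Qed.

Lemma posit (s : 'cV[R]_d) : s nbar 0 = 0 -> (forall n, n != nbar -> (A *m s) n 0 < 0) ->
  forall n, n != nbar -> 0 < s n 0.
Proof.
move=> h0 hl.
have key : forall x, (forall j, (- s) j 0 <= (- s) x 0) -> x = nbar.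
  move=> x hx; have [h1 _] := maxstep hx.
  case: (eqVneq x nbar) => // xn.
  rewrite mulmxN mxE oppr_le0 in h1.
  by have := hl x xn; rewrite ltNge h1.
have [mx hmx] := exmax (- s).
have e := key mx hmx.
have ge0 : forall j, 0 <= s j 0.
  by move=> j; have := hmx j; rewrite e !mxE h0 oppr0 oppr_le0.
move=> n hn; rewrite lt_def ge0 andbT; apply/negP => /eqP sn0.
have : n = nbar by apply: key => j; rewrite !mxE sn0 oppr0 oppr_le0; exact: ge0.
by move/eqP; rewrite (negbTE hn).
Qed.

Lemma colsum_all (x : 'cV[R]_d) : (forall k, k != nbar -> \sum_j x j 0 * A j k = 0) ->
  forall k, \sum_j x j 0 * A j k = 0.
Proof.
move=> h k; case: (eqVneq k nbar) => [->|kn]; last exact: h.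
have tot : \sum_k \sum_j x j 0 * A j k = 0.
  rewrite exchange_big /= big1 // => j _; by rewrite -big_distrr /= hrow mulr0.
have E : \sum_(k | k != nbar) \sum_j x j 0 * A j k = 0 by apply: big1 => k' kn'; apply: h.
by rewrite (bigD1 nbar) //= E addr0 in tot.
Qed.

Lemma leftzero (x : 'cV[R]_d) : x nbar 0 = 0 -> (forall k, k != nbar -> \sum_j x j 0 * A j k = 0) ->
  x = 0.
Proof.
move=> h0 h; have hall := colsum_all h.
have hallN : forall k, \sum_j (- x) j 0 * A j k = 0.
  move=> k; under eq_bigr do rewrite mxE mulNr.
  by rewrite sumrN hall oppr0.
have p1 := leftpos hall (eq_ind_r (fun t => 0 <= t) (lexx 0) h0).
have p2 : forall i, 0 <= (- x) i 0.
  apply: leftpos => //; by rewrite mxE h0 oppr0.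
apply/matrixP => i j; rewrite (ord1 j) mxE; apply/eqP; rewrite eq_le p1 andbT.
by have := p2 i; rewrite mxE oppr_ge0.
Qed.

Lemma left_annih (x : 'cV[R]_d) : (forall k, \sum_i x i 0 * A i k = 0) ->
  forall s : 'cV[R]_d, \sum_k x k 0 * (A *m s) k 0 = 0.
Proof.
move=> h s.
under eq_bigr do rewrite mxE big_distrr.
rewrite exchange_big /= big1 // => j _.
under eq_bigr do rewrite mulrA.
by rewrite -big_distrl /= h mul0r.
Qed.
End LA.

Lemma col_inj_unit (R : fieldType) n (B : 'M[R]_n) :
  (forall s : 'cV_n, B *m s = 0 -> s = 0) -> B \in unitmx.
Proof.
move=> H; rewrite -unitmx_tr -row_free_unit; apply: inj_row_free => v hv.
have : B *m v^T = 0 by rewrite -(trmxK (B *m v^T)) trmx_mul trmxK hv trmx0.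
by move/H/(congr1 trmx); rewrite trmxK trmx0.
Qed.

End Helpers.
Import Helpers.

Theorem lemma2 (R : realType) (d m : nat) (hd : (2 <= d)%N) (hm : (1 <= m)%N)
  (M : 'I_m -> R -> 'M[R[i]]_d) (c : 'I_m -> 'I_d -> R[i])
  (hTP : forall u : R, \sum_(mu < m) (adj (M mu u) *m M mu u) = 1%:M)
  (hC2 : forall mu, C2_mx (M mu))
  (h0 : forall mu, M mu 0 = diag_mx (\row_n c mu n))
  (hG : strongly_connected (Rmat M c))
  (nbar : 'I_d) :
  exists e : 'I_d -> R,
    (forall n, n != nbar -> 0 < e n) /\
    (forall lam : 'I_d -> R,
       let lamv : 'cV[R]_d :=
         \col_n (if n == nbar then - \sum_(k < d | k != nbar) e k * lam k
                 else lam n) in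
       exists sigma : 'cV[R]_d,
         (sigma nbar 0 = 0 /\ Rmat M c *m sigma = lamv) /\
         (forall sigma' : 'cV[R]_d,
            sigma' nbar 0 = 0 /\ Rmat M c *m sigma' = lamv -> sigma' = sigma) /\
         ((forall n, n != nbar -> lam n < 0) ->
            forall n, n != nbar -> 0 < sigma n 0)) /\
    (forall sigma lam : 'cV[R]_d, Rmat M c *m sigma = lam ->
       forall n : 'I_d,
         cder (cder (fun u => V0 sigma (Kmap M u (proj_basis n)))) 0
           = (lam n 0)%:C).
Proof.
have hrow := Rmat_rowsum hTP hC2 h0.
have hii := part_ii hC2 h0.
move: hG hrow; set A := Rmat M c => hG hrow.
have hoff : forall i j, i != j -> 0 <= A i j.
  move=> i j ij; rewrite /A mxE; apply: sumr_ge0 => mu _.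
  rewrite (negbTE ij) mulr0 mul0r addr0; apply: mulr_ge0 => //.
  by rewrite /sqnorm addr_ge0 // sqr_ge0.
(* left null vector *)
pose A2 : 'M[R]_d := \matrix_(i, j) if i == nbar then (j == nbar)%:R else A j i.
have EA2 : forall (x : 'cV[R]_d) i, (A2 *m x) i 0 =
    if i == nbar then x nbar 0 else \sum_j x j 0 * A j i.
  move=> x i; rewrite mxE; under eq_bigr do rewrite mxE.
  have [e|ni] := eqVneq i nbar; first subst i.
    rewrite (bigD1 nbar) //= eqxx mul1r big1 ?addr0 // => j jn.
    by rewrite (negbTE jn) mul0r.
  by apply: eq_bigr => j _; rewrite mulrC.
have U2 : A2 \in unitmx.
  apply: col_inj_unit => x hx.
  have hx' : forall i, (A2 *m x) i 0 = 0 by move=> i; rewrite hx mxE.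
  apply: (leftzero hoff hrow hG (nbar := nbar)).
    by have := hx' nbar; rewrite EA2 eqxx.
  by move=> k kn; have := hx' k; rewrite EA2 (negbTE kn).
pose pi : 'cV[R]_d := invmx A2 *m delta_mx nbar 0.
have Api : A2 *m pi = delta_mx nbar 0 by rewrite /pi mulKVmx.
have pin : pi nbar 0 = 1 by have := EA2 pi nbar; rewrite eqxx Api mxE !eqxx.
have picol : forall k, \sum_i pi i 0 * A i k = 0.
  apply: (colsum_all hrow (nbar := nbar)) => k kn.
  by have := EA2 pi k; rewrite (negbTE kn) Api mxE (negbTE kn).
have pige : forall i, 0 <= pi i 0 by apply: (leftpos hoff hrow hG (nbar := nbar) picol); rewrite pin.
have pigt : forall i, 0 < pi i 0 by apply: (strictpos hoff hG (nbar := nbar) picol pige); rewrite pin.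
exists (fun k => pi k 0); split; first by move=> n _; exact: pigt.
split; last first.
  by move=> sigma lam <- n; rewrite hii.
move=> lam lamv.
pose A1 : 'M[R]_d := \matrix_(i, j) if i == nbar then (j == nbar)%:R else A i j.
have EA1 : forall (x : 'cV[R]_d) i, (A1 *m x) i 0 =
    if i == nbar then x nbar 0 else (A *m x) i 0.
  move=> x i; rewrite mxE; under eq_bigr do rewrite mxE.
  have [e|ni] := eqVneq i nbar; first subst i.
    rewrite (bigD1 nbar) //= eqxx mul1r big1 ?addr0 // => j jn.
    by rewrite (negbTE jn) mul0r.
  by rewrite mxE.
have U1 : A1 \in unitmx.
  apply: col_inj_unit => x hx.
  have hx' : forall i, (A1 *m x) i 0 = 0 by move=> i; rewrite hx mxE.
  apply: (kerA0 hoff hrow hG (nbar := nbar)).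
    by have := hx' nbar; rewrite EA1 eqxx.
  by move=> k kn; have := hx' k; rewrite EA1 (negbTE kn).
pose rhs : 'cV[R]_d := \col_n (if n == nbar then 0 else lam n).
pose sigma := invmx A1 *m rhs.
have As : A1 *m sigma = rhs by rewrite /sigma mulKVmx.
clearbody sigma.
have sn : sigma nbar 0 = 0 by have := EA1 sigma nbar; rewrite eqxx As mxE eqxx.
have sk : forall k, k != nbar -> (A *m sigma) k 0 = lam k.
  by move=> k kn; have := EA1 sigma k; rewrite (negbTE kn) As mxE (negbTE kn).
have Asig : A *m sigma = lamv.
  apply/matrixP => i j; rewrite (ord1 j) /lamv [RHS]mxE.
  case: (eqVneq i nbar) => [->|ni]; last by rewrite sk.
  have := left_annih picol sigma.
  rewrite (bigD1 nbar) //= pin mul1r => /eqP; rewrite addr_eq0 => /eqP ->.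
  congr (- _); apply: eq_bigr => k kn; by rewrite sk.
exists sigma; split; first by split.
split.
  move=> s' [s'n As'].
  apply/eqP; rewrite -subr_eq0; apply/eqP.
  apply: (kerA0 hoff hrow hG (nbar := nbar)).
    by rewrite !mxE s'n sn subrr.
  by move=> n nn; rewrite mulmxBr As' Asig subrr mxE.
move=> hneg; apply: (posit hoff hrow sn) => n nn.
by rewrite sk //; apply: hneg.
Qed.
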